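(* Let $p\ge1$ and $n>p$ be integers, and let $\Lambda\in\mathbb R$. Let $z\in C^{2n}[-1,1]$ be a real even function such that: - $L^{2n}(\Lambda)z=0$ on $[-1,1]$, and - $z^{(j)}(\pm1)=0$ for $j=0,\dots,n-1$. Then $c:=L^{2n-2}(\Lambda)z$ is a constant function on $[-1,1]$. If $c=0$, then $z\equiv0$.
   Context: For an integer $k\ge p$ and real $\Lambda$, the differential operator $L^{2k}(\Lambda)$ on $[-1,1]$ is $$L^{2k}(\Lambda)=(-1)^k\frac{d^{2k}}{dx^{2k}}-\Lambda(-1)^{k-p}\frac{d^{2k-2p}}{dx^{2k-2p}}.$$ The constant $c$ is called the ''stone'' of $z$. *)

(* Defs.v *)
From Stdlib Require Import Reals Lra Lia.
Open Scope R_scope.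

Definition I11 (x : R) : Prop := -1 <= x <= 1.

(* Derivative of f at x relative to the domain D (one-sided at endpoints of
   an interval): lim_{y -> x, y in D, y <> x} (f y - f x)/(y - x) = l. *)
Definition deriv_within (D : R -> Prop) (f : R -> R) (x l : R) : Prop :=
  limit1_in (fun y => (f y - f x) / (y - x)) (fun y => D y /\ y <> x) l x.

Definition cont_within (D : R -> Prop) (f : R -> R) (x : R) : Prop :=
  limit1_in f D (f x) x.

Definition is_Ck_derivs (D : R -> Prop) (k : nat) (f : R -> R)
  (d : nat -> R -> R) : Prop :=
  (forall x, D x -> d 0%nat x = f x) /\
  (forall j x, (j < k)%nat -> D x -> deriv_within D (d j) x (d (S j) x)) /\
  (forall x, D x -> cont_within D (d k) x).

(* L^{2k}(Lambda) applied to a function with derivative family d, at x: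
   (-1)^k d^{(2k)} - Lambda (-1)^{k-p} d^{(2k-2p)}. *)
Definition Lop (p k : nat) (Lambda : R) (d : nat -> R -> R) (x : R) : R :=
  (-1) ^ k * d (2 * k)%nat x - Lambda * (-1) ^ (k - p) * d (2 * k - 2 * p)%nat x.

(* Main.v *)
Require Import Defs.
From Stdlib Require Import Reals Lra Lia.
Open Scope R_scope.

Lemma lim_ext (f g : R -> R) D l x0 :
  (forall y, D y -> f y = g y) -> limit1_in f D l x0 -> limit1_in g D l x0.
Proof.
  intros H L eps He; destruct (L eps He) as [a [Ha Hb]]; exists a; split; auto.
  intros y [Dy Hy]; rewrite <- H by auto; apply Hb; auto.
Qed.

Lemma lim_val (f : R -> R) D l l' x0 : limit1_in f D l x0 -> l = l' -> limit1_in f D l' x0.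
Proof. intros; subst; auto. Qed.

Lemma dw_val D f x l l' : deriv_within D f x l -> l = l' -> deriv_within D f x l'.
Proof. intros; subst; auto. Qed.

Lemma dw_ext D f g x l : (forall y, D y -> f y = g y) -> D x ->
  deriv_within D f x l -> deriv_within D g x l.
Proof.
  intros H Dx L. unfold deriv_within in *. eapply lim_ext; [|exact L].
  intros y [Dy _]. simpl. rewrite H, H by auto. reflexivity.
Qed.

Lemma dw_cont_p D f x l : deriv_within D f x l ->
  limit1_in f (fun y => D y /\ y <> x) (f x) x.
Proof.
  intros H.
  assert (L := limit_plus _ _ _ _ _ _ (limit_free f (fun y => D y /\ y <> x) x x)
     (limit_mul _ _ _ _ _ _ H (limit_minus _ _ _ _ _ _ (lim_x (fun y => D y /\ y <> x) x)
        (limit_free (fun t => t) (fun y => D y /\ y <> x) x x)))).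
  eapply lim_val. eapply lim_ext; [|exact L].
  intros y [_ Hy]. simpl. field. intro E; apply Hy; lra. ring.
Qed.

Lemma dw_cont D f x l : deriv_within D f x l -> cont_within D f x.
Proof.
  intros H. assert (L := dw_cont_p D f x l H).
  intros eps He; destruct (L eps He) as [a [Ha Hb]]; exists a; split; auto.
  intros y [Dy Hy]. destruct (Req_dec y x) as [->|Hne].
  simpl; unfold Rdist; rewrite Rminus_diag, Rabs_R0; lra.
  apply Hb; auto.
Qed.

Lemma dw_const D c x : deriv_within D (fun _ => c) x 0.
Proof.
  eapply lim_ext; [|apply (limit_free (fun _ => 0) _ x x)].
  intros y [_ Hy]; simpl. unfold Rdiv; ring.
Qed.

Lemma dw_id D x : deriv_within D (fun t => t) x 1.
Proof.
  eapply lim_ext; [|apply (limit_free (fun _ => 1) _ x x)].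
  intros y [_ Hy]; simpl. field. intro E; apply Hy; lra.
Qed.

Lemma dw_plus D f g x lf lg : deriv_within D f x lf -> deriv_within D g x lg ->
  deriv_within D (fun t => f t + g t) x (lf + lg).
Proof.
  intros A B. eapply lim_ext; [|exact (limit_plus _ _ _ _ _ _ A B)].
  intros y [_ Hy]; simpl. field. intro E; apply Hy; lra.
Qed.

Lemma dw_minus D f g x lf lg : deriv_within D f x lf -> deriv_within D g x lg ->
  deriv_within D (fun t => f t - g t) x (lf - lg).
Proof.
  intros A B. eapply lim_ext; [|exact (limit_minus _ _ _ _ _ _ A B)].
  intros y [_ Hy]; simpl. field. intro E; apply Hy; lra.
Qed.

Lemma dw_mult D f g x lf lg : deriv_within D f x lf -> deriv_within D g x lg ->
  deriv_within D (fun t => f t * g t) x (f x * lg + g x * lf).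
Proof.
  intros A B.
  assert (L := limit_plus _ _ _ _ _ _ (limit_mul _ _ _ _ _ _ (dw_cont_p _ _ _ _ A) B)
     (limit_mul _ _ _ _ _ _ (limit_free g (fun y => D y /\ y <> x) x x) A)).
  eapply lim_ext; [|exact L].
  intros y [_ Hy]; simpl. field. intro E; apply Hy; lra.
Qed.

Lemma dw_scal D c f x l : deriv_within D f x l ->
  deriv_within D (fun t => c * f t) x (c * l).
Proof.
  intros A. eapply dw_val. apply (dw_mult D (fun _ => c) f x 0 l (dw_const D c x) A). ring.
Qed.

Lemma adh_I11 x : I11 x -> adhDa (fun y => I11 y /\ y <> x) x.
Proof.
  intros Hx alp Ha. unfold I11 in *.
  set (e := Rmin (alp/2) (1/2)).
  assert (He : 0 < e) by (apply Rmin_pos; lra).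
  assert (He1 : e <= alp/2) by apply Rmin_l.
  assert (He2 : e <= 1/2) by apply Rmin_r.
  destruct (Rle_dec x 0).
  - exists (x + e). split. split. lra. lra. unfold Rdist.
    replace (x + e - x) with e by ring. rewrite Rabs_right; lra.
  - exists (x - e). split. split. lra. lra. unfold Rdist.
    replace (x - e - x) with (- e) by ring. rewrite Rabs_Ropp, Rabs_right; lra.
Qed.

Lemma dw_unique f x l1 l2 : I11 x -> deriv_within I11 f x l1 -> deriv_within I11 f x l2 -> l1 = l2.
Proof. intros Hx A B. exact (single_limit _ _ _ _ _ (adh_I11 x Hx) A B). Qed.

Lemma dw_interior f x l : -1 < x < 1 -> deriv_within I11 f x l -> derivable_pt_lim f x l.
Proof.
  intros Hx H eps He. destruct (H eps He) as [alp [Ha Hb]].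
  assert (Hd : 0 < Rmin alp (Rmin (1-x) (x+1))) by (repeat apply Rmin_pos; lra).
  exists (mkposreal _ Hd). intros h Hh Hlt. simpl in Hlt.
  assert (H1 := Rmin_l alp (Rmin (1-x) (x+1))).
  assert (H2 := Rmin_r alp (Rmin (1-x) (x+1))).
  assert (H3 := Rmin_l (1-x) (x+1)). assert (H4 := Rmin_r (1-x) (x+1)).
  apply Rabs_def2 in Hlt.
  specialize (Hb (x + h)). simpl in Hb. unfold Rdist in Hb.
  replace (x + h - x) with h in Hb by ring. apply Hb.
  split. split. unfold I11; lra. intro E; apply Hh; lra.
  unfold Rdist. replace (x + h - x) with h by ring. apply Rabs_def1; lra.
Qed.

Lemma cont_pt f x eps : cont_within I11 f x -> eps > 0 ->
  exists alp, alp > 0 /\ forall t, I11 t -> Rabs (t - x) < alp -> Rabs (f t - f x) < eps.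
Proof.
  intros H He. destruct (H eps He) as [a [Ha Hb]]. exists a; split; auto.
  intros t Ht Hd. apply (Hb t); split; auto.
Qed.

Lemma MON f f' : (forall x, I11 x -> deriv_within I11 f x (f' x)) ->
  (forall x, I11 x -> 0 <= f' x) ->
  forall x y, I11 x -> I11 y -> x <= y -> f x <= f y.
Proof.
  intros Hd Hp.
  assert (Inner : forall a b, -1 < a -> a < b -> b < 1 -> f a <= f b).
  { intros a b H1 H2 H3. destruct (MVT_cor2 f f' a b H2) as [c [Hc1 Hc2]].
    intros c Hc. apply dw_interior. lra. apply Hd. unfold I11; lra.
    assert (0 <= f' c) by (apply Hp; unfold I11; lra).
    assert (0 <= f' c * (b - a)) by (apply Rmult_le_pos; lra). lra. }
  intros x y Hx Hy Hxy. destruct (Req_dec x y) as [->|Hne]; [lra|].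
  apply Rnot_lt_le; intro Hc.
  set (eps := (f x - f y)/2).
  assert (He : eps > 0) by (unfold eps; lra).
  destruct (cont_pt f x eps (dw_cont _ _ _ _ (Hd x Hx)) He) as [a1 [Ha1 Hb1]].
  destruct (cont_pt f y eps (dw_cont _ _ _ _ (Hd y Hy)) He) as [a2 [Ha2 Hb2]].
  set (e1 := Rmin (a1/2) ((y-x)/4)). set (e2 := Rmin (a2/2) ((y-x)/4)).
  assert (0 < e1) by (apply Rmin_pos; lra). assert (0 < e2) by (apply Rmin_pos; lra).
  assert (e1 <= a1/2) by apply Rmin_l. assert (e1 <= (y-x)/4) by apply Rmin_r.
  assert (e2 <= a2/2) by apply Rmin_l. assert (e2 <= (y-x)/4) by apply Rmin_r.
  unfold I11 in *.
  assert (A := Hb1 (x + e1) ltac:(unfold I11; lra) ltac:(apply Rabs_def1; lra)).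
  assert (B := Hb2 (y - e2) ltac:(unfold I11; lra) ltac:(apply Rabs_def1; lra)).
  apply Rabs_def2 in A. apply Rabs_def2 in B.
  assert (f (x + e1) <= f (y - e2)) by (apply Inner; lra).
  unfold eps in *; lra.
Qed.

Lemma ZD f : (forall x, I11 x -> deriv_within I11 f x 0) ->
  forall x y, I11 x -> I11 y -> f x = f y.
Proof.
  intros H.
  assert (M1 := MON f (fun _ => 0) H (fun _ _ => Rle_refl 0)).
  assert (H' : forall x, I11 x -> deriv_within I11 (fun t => - f t) x (- 0)).
  { intros x Hx. exact (limit_Ropp _ _ _ _ (lim_ext _ _ _ _ _ (fun y _ => eq_refl) (H x Hx)))
    || (eapply lim_ext; [| exact (limit_Ropp _ _ _ _ (H x Hx))]; intros y [_ Hy]; simpl; unfold Rdiv; ring). }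
  assert (M2 := MON (fun t => - f t) (fun _ => -0) H' (fun _ _ => ltac:(lra))).
  intros x y Hx Hy. destruct (Rle_dec x y).
  - assert (A := M1 x y Hx Hy r). assert (B := M2 x y Hx Hy r). simpl in B. lra.
  - assert (A := M1 y x Hy Hx ltac:(lra)). assert (B := M2 y x Hy Hx ltac:(lra)). simpl in B. lra.
Qed.

Fixpoint sm (r : nat) (F : nat -> R) : R :=
  match r with O => 0 | S r' => sm r' F + F r' end.

Lemma sm_ext r F G : (forall i, (i < r)%nat -> F i = G i) -> sm r F = sm r G.
Proof.
  induction r; simpl; intros H; auto. rewrite IHr, H; auto.
Qed.

Lemma sm_tele r u : sm r (fun i => u i - u (S i)) = u 0%nat - u r.
Proof. induction r; simpl. ring. rewrite IHr; ring. Qed.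

Lemma sm_zero r F : (forall i, (i < r)%nat -> F i = 0) -> sm r F = 0.
Proof. induction r; simpl; intros H; auto. rewrite IHr, H; auto. ring. Qed.

Lemma dw_sm D r (F : nat -> R -> R) (F' : nat -> R) x :
  (forall i, (i < r)%nat -> deriv_within D (F i) x (F' i)) ->
  deriv_within D (fun y => sm r (fun i => F i y)) x (sm r F').
Proof.
  induction r; intros H; simpl.
  - apply dw_const.
  - apply dw_plus. apply IHr; auto. apply H; auto.
Qed.

Lemma TD (G Hh : nat -> R -> R) r x :
  (forall i, (i < r)%nat -> deriv_within I11 (G i) x (G (S i) x)) ->
  (forall j, (j < 2*r)%nat -> deriv_within I11 (Hh j) x (Hh (S j) x)) ->
  deriv_within I11 (fun y => sm r (fun i => (-1)^i * G i y * Hh (2*r-1-i)%nat y)) x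
    (G 0%nat x * Hh (2*r)%nat x - (-1)^r * G r x * Hh r x).
Proof.
  intros HG HH. eapply dw_val.
  - apply dw_sm with (F' := fun i => ((-1)^i * G i x) * Hh (S (2*r-1-i)) x
        + Hh (2*r-1-i)%nat x * ((-1)^i * G (S i) x)).
    intros i Hi. apply (dw_mult _ (fun y => (-1)^i * G i y) (Hh (2*r-1-i)%nat)).
    apply dw_scal. apply HG; auto. apply HH; lia.
  - rewrite (sm_ext _ _ (fun i => (-1)^i * G i x * Hh (2*r-i)%nat x
                 - (-1)^(S i) * G (S i) x * Hh (2*r - S i)%nat x)).
    + rewrite sm_tele. replace (2*r-0)%nat with (2*r)%nat by lia.
      replace (2*r-r)%nat with r by lia. simpl pow. ring.
    + intros i Hi. replace (S (2*r-1-i)) with (2*r-i)%nat by lia.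
      replace (2*r-1-i)%nat with (2*r - S i)%nat by lia. simpl pow. ring.
Qed.

Lemma sgn_sq r : (-1)^r * (-1)^r = 1.
Proof. rewrite <- pow_add. replace (r + r)%nat with (2*r)%nat by lia. apply pow_1_even. Qed.

Section Key.
Variable f : nat -> R -> R.
Variable N : nat.
Hypothesis Hf : forall j x, (j < N)%nat -> I11 x -> deriv_within I11 (f j) x (f (S j) x).

Definition Bs r y := sm r (fun i => (-1)^i * f i y * f (2*r-1-i)%nat y).
Definition Psi r y := (-1)^r * Bs r y.
Definition gg i y := y * f (S i) y + INR i * f i y.
Definition Sp r y := sm r (fun i => (-1)^i * gg i y * f (2*r-1-i)%nat y).
Definition Phi r y := (-1)^r * Sp r y + /2 * (y * (f r y * f r y)).

Lemma dPsi r x : (2*r < N)%nat -> I11 x ->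
  deriv_within I11 (Psi r) x ((-1)^r * f 0%nat x * f (2*r)%nat x - f r x * f r x).
Proof.
  intros Hr Hx. eapply dw_val. apply dw_scal. apply TD.
  intros i Hi; apply Hf; auto; lia. intros j Hj; apply Hf; auto; lia.
  assert (S2 := sgn_sq r). set (s := (-1)^r) in *.
  replace (s * (f 0%nat x * f (2 * r)%nat x - s * f r x * f r x))
    with (s * f 0%nat x * f (2 * r)%nat x - (s * s) * f r x * f r x) by ring.
  rewrite S2; ring.
Qed.

Lemma dgg i x : (S i < N)%nat -> I11 x -> deriv_within I11 (gg i) x (gg (S i) x).
Proof.
  intros Hi Hx. eapply dw_val. apply dw_plus.
  apply (dw_mult _ (fun t => t) (f (S i))). apply dw_id. apply Hf; auto.
  apply dw_scal. apply Hf; auto; lia.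
  unfold gg. rewrite S_INR. ring.
Qed.

Lemma dPhi r x : (2*r < N)%nat -> I11 x ->
  deriv_within I11 (Phi r) x ((-1)^r * x * f 1%nat x * f (2*r)%nat x - (INR r - /2) * f r x * f r x).
Proof.
  intros Hr Hx. eapply dw_val. apply dw_plus. apply dw_scal. apply TD.
  intros i Hi; apply dgg; auto; lia. intros j Hj; apply Hf; auto; lia.
  apply dw_scal. apply (dw_mult _ (fun t => t)). apply dw_id.
  apply dw_mult; apply Hf; auto; lia.
  unfold gg. simpl INR.
  assert (S2 := sgn_sq r). set (s := (-1)^r) in *.
  replace (s * ((x * f 1%nat x + 0 * f 0%nat x) * f (2 * r)%nat x -
     s * (x * f (S r) x + INR r * f r x) * f r x))
   with (s * x * f 1%nat x * f (2 * r)%nat x -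
     (s * s) * (x * f (S r) x + INR r * f r x) * f r x) by ring.
  rewrite S2. field.
Qed.

Lemma bnd_Psi r x : (forall j, (j < r)%nat -> f j x = 0) -> Psi r x = 0.
Proof.
  intros H. unfold Psi, Bs. rewrite sm_zero. ring. intros i Hi. rewrite H by auto. ring.
Qed.

Lemma bnd_Phi r x : (forall j, (j <= r)%nat -> f j x = 0) -> Phi r x = 0.
Proof.
  intros H. unfold Phi, Sp. rewrite sm_zero. rewrite H by auto. ring.
  intros i Hi. unfold gg. rewrite (H i), (H (S i)) by lia. ring.
Qed.

Lemma KEY m k Lam :
  (2*m < N)%nat -> (k < m)%nat ->
  (forall j, (j <= m)%nat -> f j 1 = 0 /\ f j (-1) = 0) ->
  (forall x, I11 x -> (-1)^m * f (2*m)%nat x - Lam * (-1)^k * f (2*k)%nat x = 0) ->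
  forall j x, (j <= m)%nat -> I11 x -> f j x = 0.
Proof.
  intros HN Hkm Hb HE.
  set (W := fun y => (INR k - /2) * (Psi m y - Lam * Psi k y) - (Phi m y - Lam * Phi k y)).
  assert (dW : forall x, I11 x -> deriv_within I11 W x ((INR m - INR k) * (f m x * f m x))).
  { intros x Hx. eapply dw_val. unfold W. apply dw_minus.
    apply dw_scal. apply dw_minus. apply dPsi; auto. apply dw_scal; apply dPsi; auto; lia.
    apply dw_minus. apply dPhi; auto. apply dw_scal; apply dPhi; auto; lia.
    assert (E := HE x Hx).
    set (e := (-1)^m * f (2*m)%nat x - Lam * (-1)^k * f (2*k)%nat x) in E.
    assert (Hid : forall a b : R, a - b * e = a) by (intros; rewrite E; ring).
    rewrite <- (Hid _ ((INR k - /2) * f 0%nat x - x * f 1%nat x)). unfold e. ring. }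
  assert (Hpos : INR k < INR m) by (apply lt_INR; auto).
  assert (Wb1 : W 1 = 0).
  { unfold W. rewrite !bnd_Psi, !bnd_Phi; try ring; intros j Hj; apply Hb; lia. }
  assert (Wb2 : W (-1) = 0).
  { unfold W. rewrite !bnd_Psi, !bnd_Phi; try ring; intros j Hj; apply Hb; lia. }
  assert (Pp : forall x, I11 x -> 0 <= (INR m - INR k) * (f m x * f m x)).
  { intros x _. apply Rmult_le_pos. lra. apply Rle_0_sqr. }
  assert (Mo := MON W _ dW Pp).
  assert (W0 : forall x, I11 x -> W x = 0).
  { intros x Hx. assert (A := Mo (-1) x ltac:(unfold I11; lra) Hx ltac:(unfold I11 in Hx; lra)).
    assert (B := Mo x 1 Hx ltac:(unfold I11; lra) ltac:(unfold I11 in Hx; lra)). lra. }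
  assert (Fm : forall x, I11 x -> f m x = 0).
  { intros x Hx. assert (Z : deriv_within I11 W x 0).
    { apply (dw_ext _ (fun _ => 0)). intros; rewrite W0; auto. auto. apply dw_const. }
    assert (U := dw_unique _ _ _ _ Hx (dW x Hx) Z).
    apply Rmult_integral in U. destruct U as [U|U]. lra.
    apply Rmult_integral in U; destruct U; auto. }
  assert (Desc : forall t, (t <= m)%nat -> forall x, I11 x -> f (m - t)%nat x = 0).
  { induction t; intros Ht x Hx. replace (m-0)%nat with m by lia. auto.
    assert (Z : forall y, I11 y -> deriv_within I11 (f (m - S t)%nat) y 0).
    { intros y Hy. eapply dw_val. apply Hf; auto. lia.
      replace (S (m - S t)) with (m - t)%nat by lia. apply IHt; auto; lia. }
    rewrite (ZD _ Z x 1 Hx ltac:(unfold I11; lra)). apply Hb; lia. }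
  intros j x Hj Hx. replace j with (m - (m - j))%nat by lia. apply Desc; auto; lia.
Qed.
End Key.

Lemma lim_refl q l x : limit1_in q (fun y => I11 y /\ y <> x) l x ->
  limit1_in (fun y => q (- y)) (fun y => I11 y /\ y <> - x) l (- x).
Proof.
  intros H eps He. destruct (H eps He) as [a [Ha Hb]]. exists a; split; auto.
  intros y [[Hy Hne] Hd]. apply (Hb (- y)). split. split.
  unfold I11 in *; lra. intro E; apply Hne; lra.
  simpl in *. unfold Rdist in *. replace (- y - x) with (- (y - - x)) by ring.
  rewrite Rabs_Ropp; auto.
Qed.

Lemma EV (z : R -> R) (d : nat -> R -> R) N :
  (forall x, I11 x -> d 0%nat x = z x) ->
  (forall j x, (j < N)%nat -> I11 x -> deriv_within I11 (d j) x (d (S j) x)) ->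
  (forall x, I11 x -> z (- x) = z x) ->
  forall j, (j <= N)%nat -> forall x, I11 x -> d j (- x) = (-1)^j * d j x.
Proof.
  intros H0 Hd Hz. induction j; intros Hj x Hx.
  - assert (I11 (-x)) by (unfold I11 in *; lra). rewrite !H0, Hz by auto. simpl; ring.
  - assert (Hmx : I11 (-x)) by (unfold I11 in *; lra).
    apply (dw_unique (d j) (-x)); [auto| apply Hd; auto; lia|].
    assert (L := limit_mul _ _ _ _ _ _ (limit_free (fun _ => (-1)^(S j)) (fun y => I11 y /\ y <> - x) x (-x))
       (lim_refl _ _ _ (Hd j x ltac:(lia) Hx))).
    eapply lim_ext; [|exact L]. intros y [Hy Hne]. simpl.
    assert (I11 (-y)) by (unfold I11 in *; lra).
    replace (d j y) with (d j (- - y)) by (f_equal; ring).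
    rewrite !IHj by (auto; lia). field. split; intro E; apply Hne; lra.
Qed.

Theorem mainTheorem3 (p n : nat) (Lambda : R) (z : R -> R) (d : nat -> R -> R) :
  (1 <= p)%nat -> (p < n)%nat ->
  is_Ck_derivs I11 (2 * n) z d ->
  (forall x, I11 x -> z (- x) = z x) ->
  (forall x, I11 x -> Lop p n Lambda d x = 0) ->
  (forall j, (j < n)%nat -> d j 1 = 0 /\ d j (-1) = 0) ->
  exists c : R,
    (forall x, I11 x -> Lop p (n - 1) Lambda d x = c) /\
    (c = 0 -> forall x, I11 x -> z x = 0).
Proof.
  intros Hp Hpn [H0 [Hd _]] Hz HL Hb.
  destruct n as [|m]; [lia|]. replace (S m - 1)%nat with m by lia.
  set (g := Lop p m Lambda d).
  set (g1 := fun x => (-1)^m * d (S (2*m)) x - Lambda * (-1)^(m-p) * d (S (2*m - 2*p)) x).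
  assert (I1 : I11 1) by (unfold I11; lra). assert (Im1 : I11 (-1)) by (unfold I11; lra).
  assert (dg : forall x, I11 x -> deriv_within I11 g x (g1 x)).
  { intros x Hx. unfold g, Lop. apply dw_minus; apply dw_scal; apply Hd; auto; lia. }
  assert (dg1 : forall x, I11 x -> deriv_within I11 g1 x 0).
  { intros x Hx. eapply dw_val. unfold g1. apply dw_minus; apply dw_scal; apply Hd; auto; lia.
    transitivity (- Lop p (S m) Lambda d x); [|rewrite HL; auto; ring]. unfold Lop.
    replace (2 * S m)%nat with (S (S (2*m))) by lia.
    replace (S m - p)%nat with (S (m - p)) by lia.
    replace (S (S (2 * m)) - 2 * p)%nat with (S (S (2*m - 2*p))) by lia.
    simpl pow. ring. }
  set (b := g1 1).
  assert (Hg1 : forall x, I11 x -> g1 x = b) by (intros; apply ZD; auto).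
  assert (dh : forall x, I11 x -> deriv_within I11 (fun y => g y - b * y) x 0).
  { intros x Hx. eapply dw_val. apply dw_minus. apply dg; auto. apply dw_scal, dw_id.
    rewrite Hg1; auto; ring. }
  assert (Hh := ZD _ dh).
  assert (Ev := EV z d _ H0 Hd Hz).
  assert (geven : forall x, I11 x -> g (-x) = g x).
  { intros x Hx. unfold g, Lop.
    replace (2*m - 2*p)%nat with (2*(m-p))%nat by lia.
    rewrite !Ev by (auto; lia). rewrite !pow_1_even. ring. }
  assert (b0 : b = 0).
  { assert (A := Hh (- (1)) 1 ltac:(unfold I11; lra) I1). cbv beta in A. rewrite (geven 1 I1) in A. lra. }
  exists (g 1). split.
  - intros x Hx. assert (A := Hh x 1 Hx I1). rewrite b0 in A. lra.
  - intros c0 x Hx.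
    assert (HE : forall x, I11 x -> (-1)^m * d (2*m)%nat x - Lambda * (-1)^(m-p) * d (2*(m-p))%nat x = 0).
    { intros y Hy. replace (2*(m-p))%nat with (2*m - 2*p)%nat by lia.
      assert (A := Hh y 1 Hy I1). rewrite b0, c0 in *. unfold g, Lop in A. lra. }
    rewrite <- H0 by auto.
    apply (KEY d (2 * S m) Hd m (m - p) Lambda); auto; try lia.
    intros j Hj; apply Hb; lia.
Qed.
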